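(* Let $f:\{0,1\}^n\to\{0,1\}$ be a Boolean function and $0<\epsilon<1$. Then $\operatorname{rdeg}_\epsilon(f)\le2\max\{\mathsf N_\epsilon(f),\mathsf N_\epsilon(\overline f)\}$.
   Context: $\mathsf N_\epsilon(f)$ is the minimum degree of a real polynomial $p$ with $|p(x)|\le\epsilon$ whenever $f(x)=0$ and $|p(x)|\ge1$ whenever $f(x)=1$; $\overline f=1-f$. The approximate rational degree $\operatorname{rdeg}_\epsilon(f)$ is the minimum of $\max\{\deg p,\deg q\}$ over real polynomials $p,q$ such that $q(x)\neq 0$ and $|f(x)-p(x)/q(x)|\le\epsilon$ for all $x\in\{0,1\}^n$. *)

(* Defs.v *)
From mathcomp Require Import all_boot all_algebra.
From mathcomp Require Import Rstruct.
From mathcomp Require Import mpoly.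
From Stdlib Require Import Reals.
Set Implicit Arguments.
Unset Strict Implicit.
Import GRing.Theory Num.Theory.
Local Open Scope ring_scope.

Definition embed (n : nat) (x : 'I_n -> bool) : 'I_n -> R :=
  fun i => (x i)%:R.

Definition peval (n : nat) (p : {mpoly R[n]}) (x : 'I_n -> bool) : R :=
  p.@[embed x].

(* deg p <= d  (msize p = total degree + 1, and msize 0 = 0) *)
Definition deg_le (n : nat) (p : {mpoly R[n]}) (d : nat) : Prop :=
  leq (msize p) d.+1.

Definition one_sided_rep (n : nat) (f : ('I_n -> bool) -> bool) (eps : R)
    (d : nat) : Prop :=
  exists p : {mpoly R[n]}, deg_le p d /\
    forall x : 'I_n -> bool,
      (f x = false -> `|peval p x| <= eps) /\
      (f x = true -> 1 <= `|peval p x|).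

Definition N_eps_is (n : nat) (f : ('I_n -> bool) -> bool) (eps : R)
    (d : nat) : Prop :=
  one_sided_rep f eps d /\ forall d', one_sided_rep f eps d' -> leq d d'.

Definition rat_approx (n : nat) (f : ('I_n -> bool) -> bool) (eps : R)
    (d : nat) : Prop :=
  exists p q : {mpoly R[n]}, deg_le p d /\ deg_le q d /\
    forall x : 'I_n -> bool,
      peval q x != 0 /\
      `|(f x)%:R - peval p x / peval q x| <= eps.

Definition rdeg_is (n : nat) (f : ('I_n -> bool) -> bool) (eps : R)
    (d : nat) : Prop :=
  rat_approx f eps d /\ forall d', rat_approx f eps d' -> leq d d'.

Definition fneg (n : nat) (f : ('I_n -> bool) -> bool) : ('I_n -> bool) -> bool :=
  fun x => ~~ f x.

(* Main.v *)
Require Import Defs.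
From mathcomp Require Import all_boot all_algebra.
From mathcomp Require Import Rstruct.
From mathcomp Require Import mpoly.
From mathcomp Require Import lra ring zify.
From Stdlib Require Import Reals.
Import GRing.Theory Num.Theory.
Local Open Scope ring_scope.
Lemma sq (u : R) : u * u = `|u| * `|u|.
Proof. by rewrite -normrM ger0_norm // -expr2 sqr_ge0. Qed.
Lemma t (U V e : R) : 0 < e -> e < 1 -> 1 <= U -> 0 <= V -> V <= e -> V*V <= e*(U*U+V*V).
Proof. move=> e0 e1 U1 V0 Ve.
have h1 : V*V <= e*e by apply: ler_pM.
have h2 : 1 <= U*U by rewrite -[1]mulr1; apply: ler_pM.
have h3 : 0 <= V*V by apply: mulr_ge0.
have h4 : e*1 <= e*(U*U+V*V) by rewrite ler_pM2l //; lra.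
have h5 : e*e <= e*1 by rewrite ler_pM2l //; lra.
lra. Qed.

Lemma sqdeg n (p : {mpoly R[n]}) d : deg_le p d -> deg_le (p*p) (2*d).
Proof.
rewrite /deg_le; have [->|pn0] := eqVneq p 0; first by rewrite mul0r msize0.
rewrite msizeM // -subn1 => h; rewrite leq_subLR; apply: leq_trans (leq_add h h) _; lia.
Qed.

Lemma degmono n (p : {mpoly R[n]}) (d e : nat) : leq d e -> deg_le p d -> deg_le p e.
Proof. rewrite /deg_le => h1 h2; lia. Qed.

Theorem lemma3p5 (n : nat) (f : ('I_n -> bool) -> bool) (eps : R)
    (Heps0 : 0 < eps) (Heps1 : eps < 1) (a b r : nat) :
  N_eps_is f eps a -> N_eps_is (fneg f) eps b -> rdeg_is f eps r ->
  leq r (muln 2 (maxn a b)).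
Proof.
case=> [[p [dp Hp]] _] [[q [dq Hq]] _] [_ min]; apply: min.
have dp' : deg_le p (maxn a b) by apply: degmono dp; exact: leq_maxl.
have dq' : deg_le q (maxn a b) by apply: degmono dq; exact: leq_maxr.
have dP := @sqdeg n p (maxn a b) dp'; have dQ := @sqdeg n q (maxn a b) dq'.
exists (p*p), (p*p+q*q); split => //; split.
  rewrite /deg_le; apply: leq_trans (mmeasureD_le _ _ _) _.
  by rewrite geq_max dP dQ.
move=> x; rewrite /peval mevalD !mevalM.
have [Hp0 Hp1] := Hp x; have [Hq0 Hq1] := Hq x; rewrite /fneg in Hq0 Hq1.
rewrite (sq (meval _ p)) (sq (meval _ q)).
set U := `|meval _ p|; set V := `|meval _ q|.
have U0 : 0 <= U by apply: normr_ge0.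
have V0 : 0 <= V by apply: normr_ge0.
case fx: (f x).
- have U1 := Hp1 fx; have Ve : V <= eps by apply: Hq0; rewrite fx.
  have Q1 : 1 <= U*U+V*V.
    have : 1 <= U*U by rewrite -[1]mulr1; apply: ler_pM.
    have : 0 <= V*V by apply: mulr_ge0.
    lra.
  have Qn0 : U*U+V*V != 0 by apply/eqP => h; rewrite h in Q1; lra.
  split => //.
  have -> : (true%:R - U*U/(U*U+V*V)) = V*V/(U*U+V*V) by rewrite /= -{1}(divff Qn0) -mulrBl [U*U+_]addrC addrK.
  rewrite ger0_norm; last by apply: divr_ge0; [apply: mulr_ge0|lra].
  rewrite ler_pdivrMr; last by lra.
  exact: t.
- have V1 : 1 <= V by apply: Hq1; rewrite fx.
  have Ue := Hp0 fx.
  have Q1 : 1 <= U*U+V*V.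
    have : 1 <= V*V by rewrite -[1]mulr1; apply: ler_pM.
    have : 0 <= U*U by apply: mulr_ge0.
    lra.
  have Qn0 : U*U+V*V != 0 by apply/eqP => h; rewrite h in Q1; lra.
  split => //.
  rewrite /= sub0r normrN ger0_norm; last by apply: divr_ge0; [apply: mulr_ge0|lra].
  rewrite ler_pdivrMr; last by lra.
  rewrite addrC; exact: t.
Qed.
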